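(* Let $q$ be a prime power, $n\ge 2$, $c\in\mathbb{F}_q^*$ and $M=c\,\mathbb{I}_{n\times n}$. Let $\mathcal{B}_n=\{u\in\mathbb{F}_q^n : \langle u,u\rangle=0\}$ and $\nu'_M:\mathcal{B}_n\to\mathbb{F}_q$, $\nu'_M(u)=\langle u,Mu\rangle$. (i) If $q$ is even, then $\mathrm{Num}'_0(c\,\mathbb{I}_{n\times n})_q=\{0\}$ and $\sharp(\nu_M'^{-1}(0))=q^{n-1}$. (ii) Assume $q$ is odd. Then $\mathrm{Num}'_0(c\,\mathbb{I}_{n\times n})_q=\{0\}$ if either $n\ge 3$, or $n=2$ and $q\equiv 1\pmod 4$, while $\mathrm{Num}'_0(c\,\mathbb{I}_{n\times n})_q=\emptyset$ if $n=2$ and $q\equiv -1\pmod 4$. If $n=2s+1$ is odd, then $\sharp(\nu_M'^{-1}(0))=q^{2s}$. If $n=2s$ with either $s$ even or $q\equiv 1\pmod 4$, then $\sharp(\nu_M'^{-1}(0))=q^{2s-1}+q^s-q^{s-1}$. If $n=2s$ with $s$ odd and $q\equiv -1\pmod 4$, then $\sharp(\nu_M'^{-1}(0))=q^{2s-1}-q^s+q^{s-1}$.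
   Context: The Hermitian form is $\langle u,v\rangle=\sum_i u_i^qv_i$; for $u=(x_1,\dots,x_n)\in\mathbb{F}_q^n$ and $M=(m_{ij})$ over $\mathbb{F}_q$, $\langle u,u\rangle=\sum x_i^2$ and $\langle u,Mu\rangle=\sum_{i,j}m_{ij}x_ix_j$. $\mathrm{Num}'_0(M)_q=\{\langle u,Mu\rangle: u\in\mathbb{F}_q^n\setminus\{0\},\ \langle u,u\rangle=0\}$. *)

(* Defs.v *)
From HB Require Import structures.
From mathcomp Require Import all_boot all_order all_algebra all_field.
Set Implicit Arguments. Unset Strict Implicit. Unset Printing Implicit Defensive.
Import GRing.Theory.
Local Open Scope ring_scope.

Definition hform (F : finFieldType) (n : nat) (u v : 'cV[F]_n) : F :=
  \sum_(i < n) (u i 0) ^+ #|F| * v i 0.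

Definition Bn (F : finFieldType) (n : nat) : {set 'cV[F]_n} :=
  [set u | hform u u == 0].

Definition nuM (F : finFieldType) (n : nat) (M : 'M[F]_n) (u : 'cV[F]_n) : F :=
  hform u (M *m u).

Definition Num0' (F : finFieldType) (n : nat) (M : 'M[F]_n) : {set F} :=
  [set nuM M u | u in [set u in Bn F n | u != 0]].

Definition nuM_fiber0 (F : finFieldType) (n : nat) (M : 'M[F]_n) : {set 'cV[F]_n} :=
  [set u in Bn F n | nuM M u == 0].

(* Main.v *)
Require Import Defs.
From HB Require Import structures.
From mathcomp Require Import all_boot all_order all_algebra all_field.
From mathcomp Require Import zify ring.
Set Implicit Arguments. Unset Strict Implicit. Unset Printing Implicit Defensive.
Import GRing.Theory.
Local Open Scope ring_scope.

Lemma closed_form (b : bool) (q : int) (f : nat -> int) :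
  f 0%N = 1 -> f 1%N = 1 ->
  (forall n, f n.+2 = (-1) ^+ b * q * f n + (q - (-1) ^+ b) * q ^+ n) ->
  forall s, f s.*2.+1 = q ^+ s.*2 /\
            f s.*2.+2 = q ^+ s.*2.+1 + ((-1) ^+ b) ^+ s.+1 * (q ^+ s.+1 - q ^+ s).
Proof.
move=> f0 f1; case: b; rewrite ?expr1 ?expr0 => rec; elim=> [|s [IH1 IH2]].
- by rewrite /= f1 rec f0; split; ring.
- by rewrite doubleS (rec s.*2.+1) (rec s.*2.+2) IH1 IH2 !exprS; split; ring.
- by rewrite /= f1 rec f0; split; ring.
- by rewrite doubleS (rec s.*2.+1) (rec s.*2.+2) IH1 IH2 !exprS; split; ring.
Qed.

Lemma solveK1 (q K : nat) : (1 < q)%N -> (q.*2.-1 + q.-1 * K = q ^ 2)%N -> K = q.-1.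
Proof.
case: q => [|[|p]] // _ /= h; apply/eqP; rewrite -(eqn_pmul2l (ltn0Sn p)); apply/eqP.
have e : ((p.+2) ^ 2 = (p.+2).*2.-1 + p.+1 * p.+1)%N by nia.
lia.
Qed.
Lemma solveK2 (q K : nat) : (1 < q)%N -> (1 + q.-1 * K = q ^ 2)%N -> K = q.+1.
Proof.
case: q => [|[|p]] // _ /= h; apply/eqP; rewrite -(eqn_pmul2l (ltn0Sn p)); apply/eqP.
have e : ((p.+2) ^ 2 = 1 + p.+1 * p.+3)%N by nia.
lia.
Qed.


Section Count.
Variable F : finFieldType.

Fixpoint N (n : nat) (a : F) : nat :=
  if n is n'.+1 then (\sum_(x : F) N n' (a - x * x)%R)%N else (a == 0 : nat).

Definition sq n (u : 'cV[F]_n) : F := \sum_(i < n) u i 0 * u i 0.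

Lemma card_setE (T : finType) (P : pred T) : #|[set x | P x]| = (\sum_(x : T) (P x : nat))%N.
Proof. by rewrite -sum1_card big_mkcond /=; apply: eq_bigr => x _; rewrite inE; case: (P x). Qed.

Definition hc n (p : F * 'cV[F]_n) : 'cV[F]_n.+1 :=
  \col_(i < n.+1) (if unlift ord0 i is Some j then p.2 j 0 else p.1).
Definition gc n (u : 'cV[F]_n.+1) : F * 'cV[F]_n :=
  (u ord0 0, \col_(i < n) u (lift ord0 i) 0).

Lemma hc_bij n : bijective (@hc n).
Proof.
exists (@gc n).
  case=> x v; rewrite /gc /hc /= mxE unlift_none; congr pair.
  by apply/matrixP=> i j; rewrite !mxE liftK ord1.
move=> u; apply/matrixP=> i j; rewrite /hc /gc !mxE ord1.
by case: unliftP => [k ->|->] /=; rewrite ?mxE.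
Qed.

Lemma cardN n a : #|[set u : 'cV[F]_n | sq u == a]| = N n a.
Proof.
elim: n a => [|n IH] a.
  rewrite card_setE /=; under eq_bigr do rewrite /sq big_ord0.
  rewrite (eq_bigr (fun _ => (0 == a : nat))) ?sum_nat_const; last by [].
  by rewrite card_mx /= mul1n eq_sym; case: (_ == _).
rewrite card_setE (reindex (@hc n)); last by apply: onW_bij; apply: hc_bij.
rewrite -(pair_big xpredT xpredT (fun x v => (sq (hc (x, v)) == a : nat))) /=.
apply: eq_bigr => x _; rewrite -IH card_setE; apply: eq_bigr => v _.
rewrite /sq big_ord_recl /hc !mxE unlift_none.
under eq_bigr do rewrite !mxE liftK.
by rewrite /= addrC (can2_eq (addrK _) (subrK _)).
Qed.

Lemma N_conv m n a : N (m + n) a = (\sum_b N m b * N n (a - b)%R)%N.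
Proof.
elim: m a => [|m IH] a /=.
  rewrite (bigD1 0) //= eqxx mul1n subr0 big1 ?addn0 // => b /negbTE nb.
  by rewrite nb.
rewrite [RHS](eq_bigr (fun b => \sum_x N m (b - x * x)%R * N n (a - b)%R)%N); last first.
  by move=> b _; rewrite big_distrl.
rewrite [RHS]exchange_big /=; apply: eq_bigr => x _.
rewrite IH [RHS](reindex_inj (addIr (x * x))) /=; apply: eq_bigr => b _.
by rewrite addrK (addrC b) opprD addrA.
Qed.

Lemma N_sum n : (\sum_b N n b = #|F| ^ n)%N.
Proof.
elim: n => [|n IH] /=.
  by rewrite (bigD1 0) //= eqxx big1 // => b /negbTE ->.
rewrite exchange_big /= expnS -sum_nat_const.
apply: eq_bigr => x _; rewrite -IH.
by rewrite (reindex_inj (addIr (x * x))) /=; under eq_bigr do rewrite addrK.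
Qed.


Lemma char2 : (2%:R == 0 :> F) = ~~ odd #|F|.
Proof.
have [p pp pc] := finPcharP F.
have k0 : (0 < logn p #|F|)%N.
  case: (ltnP 0 (logn p #|F|)) => // h.
  have := finNzRing_gt1 F; rewrite (card_pprimeChar pc).
  by move: h; rewrite leqn0 => /eqP ->.
rewrite (card_pprimeChar pc) oddX; case: (logn _ _) k0 => // k _ /=.
case: (even_prime pp) => [p2|op].
  by move: pc; rewrite p2 => /andP[_ ->].
rewrite op /=; apply/negbTE/negP => h2.
have c2 : 2 \in [pchar F] by rewrite inE h2.
by move: (pcharf_eq pc 2); rewrite c2 inE => /esym/eqP p2; rewrite -p2 in op.
Qed.

Lemma sq_img : (#|F| <= 2 * #|[set (x * x)%R | x : F]|)%N.
Proof.
pose r (v : F) := odflt 0 [pick x | x * x == v].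
pose g (x : F) := (x * x, x == r (x * x)).
have rP x : r (x * x) * r (x * x) = x * x.
  rewrite /r; case: pickP => [y /eqP //|/(_ x)]; by rewrite eqxx.
have ginj : injective g.
  move=> x y [exy]; rewrite -exy.
  have : (x ^+ 2 == (r (x * x)) ^+ 2) by rewrite !expr2 rP.
  have : (y ^+ 2 == (r (x * x)) ^+ 2) by rewrite !expr2 rP exy.
  rewrite !eqf_sqr.
  case: (x =P r _) => [->|_]; case: (y =P r _) => [->|_] //=; first by rewrite rP.
  by move=> /eqP -> /eqP -> _; rewrite mulrNN rP.
rewrite -cardsT -(card_imset [set: F] ginj).
have -> : (2 * #|[set (x * x)%R | x : F]| = #|setX [set (x * x)%R | x : F] [set: bool]|)%N.
  by rewrite cardsX cardsT card_bool mulnC.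
apply: subset_leq_card; apply/subsetP => z /imsetP[x _ ->].
by rewrite !inE /= andbT; apply: imset_f.
Qed.

Lemma sum2sq c : odd #|F| -> exists x y : F, x * x + y * y = c.
Proof.
move=> oq.
set A := [set (x * x)%R | x : F].
pose B := [set c - v | v in A].
have AB : #|B| = #|A|.
  apply: card_imset => u v /eqP; rewrite (inj_eq (addrI c)) (inj_eq oppr_inj).
  by move/eqP.
have := sq_img; rewrite -/A => hA.
have hA' : (#|F| < 2 * #|A|)%N.
  rewrite ltn_neqAle hA andbT; apply/eqP => e; move: oq; rewrite e.
  by rewrite oddM.
case: (set_0Vmem (A :&: B)) => [e|[v]].
  have := cardsUI A B; rewrite e cards0 addn0 AB => e2.
  by have := max_card (A :|: B); rewrite e2 addnn -mul2n leqNgt hA'.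
rewrite inE => /andP[/imsetP[x _ ->] /imsetP[w /imsetP[y _ ->] e]].
by exists x, y; rewrite e subrK.
Qed.

Definition S2 (b : F) := [set p : F * F | p.1 * p.1 + p.2 * p.2 == b].

Lemma N2E b : N 2 b = #|S2 b|.
Proof.
rewrite /S2 card_setE -(pair_big xpredT xpredT (fun x y => (x * x + y * y == b : nat))) /=.
apply: eq_bigr => x _; apply: eq_bigr => y _.
rewrite subr_eq0; congr (nat_of_bool _); apply/eqP/eqP => h.
  by rewrite -h; ring.
by rewrite -h; ring.
Qed.

Lemma N2_mul b (a x0 y0 : F) : a = x0 * x0 + y0 * y0 -> a != 0 -> (N 2 b <= N 2 (a * b)%R)%N.
Proof.
move=> ea a0; rewrite !N2E.
pose f (p : F * F) := (p.1 * x0 - p.2 * y0, p.1 * y0 + p.2 * x0).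
have finj : injective f.
  move=> [p1 p2] [r1 r2] [e1 e2].
  have h1 : (p1 - r1) * a = 0.
    rewrite ea; have -> : (p1 - r1) * (x0 * x0 + y0 * y0) =
      x0 * ((p1 * x0 - p2 * y0) - (r1 * x0 - r2 * y0)) +
      y0 * ((p1 * y0 + p2 * x0) - (r1 * y0 + r2 * x0)) by ring.
    by rewrite e1 e2 !subrr !mulr0 addr0.
  have h2 : (p2 - r2) * a = 0.
    rewrite ea; have -> : (p2 - r2) * (x0 * x0 + y0 * y0) =
      - y0 * ((p1 * x0 - p2 * y0) - (r1 * x0 - r2 * y0)) +
      x0 * ((p1 * y0 + p2 * x0) - (r1 * y0 + r2 * x0)) by ring.
    by rewrite e1 e2 !subrr !mulr0 addr0.
  move: h1 h2 => /eqP; rewrite mulf_eq0 (negbTE a0) orbF subr_eq0 => /eqP ->.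
  by move=> /eqP; rewrite mulf_eq0 (negbTE a0) orbF subr_eq0 => /eqP ->.
rewrite -(card_imset (S2 b) finj); apply: subset_leq_card; apply/subsetP => z.
case/imsetP => [[p1 p2]]; rewrite !inE /= => /eqP eb ->; rewrite /= -eb ea.
by apply/eqP; ring.
Qed.

Lemma N2_const a : odd #|F| -> a != 0 -> N 2 a = N 2 1.
Proof.
move=> oq a0; apply/eqP; rewrite eqn_leq; apply/andP; split.
  have [x [y e]] := sum2sq (a^-1) oq.
  by have := N2_mul a (esym e); rewrite invr_eq0 a0 mulVf // => ->.
have [x [y e]] := sum2sq a oq.
by have := N2_mul 1 (esym e); rewrite a0 mulr1 => ->.
Qed.

Lemma sum_eq1 (c : F) : (\sum_(x : F) (x == c : nat) = 1)%N.
Proof. by rewrite (bigD1 c) //= eqxx big1 // => x /negbTE ->. Qed.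

Lemma card_line (i : F) : #|[set p : F * F | p.1 == i * p.2]| = #|F|.
Proof.
rewrite card_setE -(pair_big xpredT xpredT (fun x y => (x == i * y : nat))) /=.
rewrite exchange_big /= -[#|F|]muln1 -sum_nat_const; apply: eq_bigr => y _; exact: sum_eq1.
Qed.

Lemma N2_0_sq (i : F) : odd #|F| -> i * i = -1 -> N 2 0 = (#|F|.*2).-1%N.
Proof.
move=> oq ii; rewrite N2E.
have two0 : (2%:R != 0 :> F) by rewrite char2 negbK.
have i0 : i != 0 by apply/eqP => e; move: ii; rewrite e mul0r => /eqP; rewrite eq_sym oppr_eq0 oner_eq0.
set A := [set p : F * F | p.1 == i * p.2].
set B := [set p : F * F | p.1 == (- i) * p.2].
have -> : S2 0 = A :|: B.
  apply/setP => [[x y]]; rewrite !inE /=.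
  have -> : (x * x + y * y == 0) = (x ^+ 2 == (i * y) ^+ 2).
    by rewrite addr_eq0 !expr2 mulrACA ii mulN1r.
  by rewrite eqf_sqr mulNr.
have AB : A :&: B = [set (0, 0)].
  apply/setP => [[x y]]; rewrite !inE /= xpair_eqE.
  apply/andP/andP => [[/eqP -> ]|[/eqP -> /eqP ->]]; last by rewrite !mulr0.
  move=> h; suff y0 : y == 0 by rewrite (eqP y0) mulr0.
  move: h; rewrite mulNr -addr_eq0 -mulr2n -mulr_natr !mulf_eq0 (negbTE two0) (negbTE i0) /=; by rewrite orbF.
have := cardsUI A B; rewrite AB cards1 /A /B !card_line.
lia.
Qed.

Lemma N2_0_nsq : (forall i : F, i * i != -1) -> N 2 0 = 1%N.
Proof.
move=> nsq; rewrite N2E.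
have -> : S2 0 = [set (0, 0)].
  apply/setP => [[x y]]; rewrite !inE /= xpair_eqE.
  apply/idP/andP => [|[/eqP -> /eqP ->]]; last by rewrite mulr0 addr0.
  case: (y =P 0) => [-> | /eqP y0].
    by rewrite mulr0 addr0 mulf_eq0 orbb => ->.
  rewrite addr_eq0 => /eqP e; have := nsq (x / y).
  by rewrite mulrACA e -invfM mulNr mulfV ?mulf_neq0 ?eqxx.
by rewrite cards1.
Qed.


Lemma sqm1_mod4 : odd #|F| -> (exists i : F, i * i = -1) <-> (#|F| %% 4 = 1)%N.
Proof.
move=> oq.
have two0 : (2%:R != 0 :> F) by rewrite char2 negbK.
have m1n1 : (-1 != 1 :> F).
  apply/eqP => e; move: two0.
  have -> : (2%:R : F) = 1 - (-1) by ring.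
  by rewrite -{1}e subrr eqxx.
have q0 := finNzRing_gt1 F.
set q := #|F| in oq q0 *.
have hq : q = (q./2).*2.+1 by rewrite -[LHS](odd_double_half q) oq.
split.
  case=> i ii.
  have i0 : i != 0 by apply/eqP => e; move: ii; rewrite e mul0r => /eqP; rewrite eq_sym oppr_eq0 oner_eq0.
  have := expf_card i; rewrite -/q hq exprSr -{3}[i]mul1r => /(mulIf i0).
  rewrite -mul2n exprM expr2 ii.
  case: (boolP (odd (q./2))) => om.
    by rewrite -signr_odd om expr1 => e; move: m1n1; rewrite e eqxx.
  move=> _; rewrite -[q./2](odd_double_half) (negbTE om) add0n.
  rewrite -!mul2n mulnA -addn1; lia.
move=> q4.
case: (boolP [exists i : F, i * i == -1]) => [/existsP[i /eqP ii]|/existsPn nsq].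
  by exists i.
exfalso.
set k := (q %/ 4)%N.
have hk : q = (k * 4 + 1)%N by rewrite {1}(divn_eq q 4) q4.
have k0 : (0 < k)%N by lia.
have allr : forall x : F, x != 0 -> x ^+ (k.*2) = 1.
  move=> x x0.
  have h4 : (x ^+ (k.*2)) ^+ 2 = 1 ^+ 2.
    rewrite -exprM expr1n; have := expf_card x; rewrite -/q hk addn1 exprSr.
    rewrite -{3}[x]mul1r => /(mulIf x0); congr (_ ^+ _ = _); lia.
  move/eqP: h4; rewrite eqf_sqr => /orP[/eqP //| /eqP e].
  by move: (nsq (x ^+ k)); rewrite -exprD addnn e eqxx.
have := @max_unity_roots F (k.*2) (enum (predC1 0)).
rewrite enum_uniq -cardE cardC1 -/q double_gt0 k0.
have -> : all (k.*2).-unity_root (enum (predC1 (0%R : F))).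
  by apply/allP => x; rewrite mem_enum => x0; rewrite unity_rootE allr.
move=> /(_ isT isT isT); lia.
Qed.


Lemma N_even_char2 n a : ~~ odd #|F| -> N n.+1 a = (#|F| ^ n)%N.
Proof.
move=> eq; have two0 : (2%:R == 0 :> F) by rewrite char2.
have sqinj : injective (fun x : F => x * x).
  move=> x y /= e; have h : (x - y) * (x - y) = 0.
    have -> : (x - y) * (x - y) = x * x - y * y - 2%:R * (x * y - y * y) by ring.
    by rewrite e subrr (eqP two0) mul0r subr0.
  by move/eqP: h; rewrite mulf_eq0 orbb subr_eq0 => /eqP.
rewrite /= -(N_sum n) [RHS](reindex_inj (addrI a)) /= [RHS](reindex_inj oppr_inj) /=.
by rewrite [RHS](reindex_inj sqinj) /=.
Qed.

Lemma N_rec n : odd #|F| -> exists S, (S + N n (0%R : F) = #|F| ^ n)%N /\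
  N n.+2 (0%R : F) = (N 2 (0%R : F) * N n (0%R : F) + N 2 (1%R : F) * S)%N.
Proof.
move=> oq.
exists (\sum_(b : F | b != 0%R) N n (- b)%R)%N; split.
  have := N_sum n; rewrite (reindex_inj oppr_inj) (bigD1 0) //= oppr0 => <-.
  by rewrite addnC.
rewrite (N_conv 2 n) (bigD1 0) // subr0; congr addn; rewrite big_distrr.
by apply: eq_bigr => b b0; rewrite sub0r (N2_const oq b0).
Qed.

Lemma N2_sum : odd #|F| -> (N 2 (0%R : F) + #|F|.-1 * N 2 (1%R : F) = #|F| ^ 2)%N.
Proof.
move=> oq; have := N_sum 2; rewrite (bigD1 0%R) //.
rewrite (eq_bigr (fun _ => N 2 (1%R : F))); last by move=> b b0; rewrite N2_const.
rewrite sum_nat_const => <-; congr addn; congr muln.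
by rewrite -(cardC1 (0%R : F)); apply: eq_card.
Qed.


Lemma N_rec_int n : odd #|F| ->
  (N n.+2 (0%R : F))%:Z = (-1) ^+ (~~ [exists i : F, i * i == -1]) * (#|F|)%:Z * (N n (0%R : F))%:Z
     + ((#|F|)%:Z - (-1) ^+ (~~ [exists i : F, i * i == -1])) * (#|F|)%:Z ^+ n.
Proof.
move=> oq; have [S [hS hN]] := N_rec n oq; have hsum := N2_sum oq.
have q1 := finNzRing_gt1 F.
have eQ : (#|F|)%:Z ^+ n = S%:Z + (N n (0%R : F))%:Z by rewrite -PoszD hS -!natz natrX.
rewrite eQ hN PoszD !PoszM.
set q := #|F| in hsum q1 *.
case: (boolP [exists i : F, i * i == -1]) => [/existsP[i /eqP ii] | /existsPn nsq].
  have hA := N2_0_sq oq ii; rewrite -/q in hA.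
  have hK : N 2 (1%R : F) = q.-1 by rewrite hA in hsum; exact: solveK1.
  rewrite hA hK /=.
  have -> : (q.*2.-1)%:Z = 2 * q%:Z - 1 by lia.
  have -> : (q.-1)%:Z = q%:Z - 1 by lia.
  ring.
have hA : N 2 (0%R : F) = 1%N by apply: N2_0_nsq => i; exact: nsq.
have hK : N 2 (1%R : F) = q.+1 by rewrite hA in hsum; exact: solveK2.
rewrite hA hK /=.
rewrite expr1 -[q.+1]addn1 PoszD; ring.
Qed.


Lemma hformE n (u : 'cV[F]_n) : hform u u = sq u.
Proof. by rewrite /hform /sq; apply: eq_bigr => i _; rewrite expf_card. Qed.

Lemma nuME n (c : F) (u : 'cV[F]_n) : nuM (c%:M) u = c * sq u.
Proof.
rewrite /nuM /hform /sq mul_scalar_mx mulr_sumr; apply: eq_bigr => i _.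
by rewrite expf_card mxE mulrCA.
Qed.

Lemma fiberE n (c : F) : nuM_fiber0 (c%:M : 'M[F]_n) = [set u | sq u == 0].
Proof.
apply/setP => u; rewrite !inE hformE nuME.
by case: (sq u =P 0) => [->|] //=; rewrite mulr0 eqxx.
Qed.

Lemma Num0_ex n (c : F) (u : 'cV[F]_n) : u != 0 -> sq u = 0 -> Num0' (c%:M : 'M[F]_n) = [set 0].
Proof.
move=> u0 su; apply/setP => v; rewrite inE; apply/imsetP/eqP => [[w]|->].
  by rewrite !inE hformE => /andP[/eqP hw _] ->; rewrite nuME hw mulr0.
by exists u; rewrite ?inE ?hformE ?su ?eqxx ?u0 // nuME su mulr0.
Qed.

Lemma Num0_none n (c : F) : (forall u : 'cV[F]_n, sq u = 0 -> u = 0) -> Num0' (c%:M : 'M[F]_n) = set0.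
Proof.
move=> H; apply/setP => v; rewrite inE; apply/imsetP => [[w]].
by rewrite !inE hformE => /andP[/eqP hw]; rewrite (H w hw) eqxx.
Qed.

Definition vec3 n (y z : F) : 'cV[F]_n := \col_(i < n) [:: 1; y; z]`_i.

Lemma vec3_neq0 n (y z : F) : (0 < n)%N -> vec3 n y z != 0.
Proof.
move=> n0; apply/eqP => e; have := congr1 (fun M : 'cV[F]_n => M (Ordinal n0) 0) e.
by rewrite !mxE /= => /eqP; rewrite oner_eq0.
Qed.

Lemma sq_vec3 n (y z : F) : (2 <= n)%N -> z = 0 \/ (2 < n)%N ->
  sq (vec3 n y z) = 1 + y * y + z * z.
Proof.
move=> n2 hz; rewrite /sq /vec3.
under eq_bigr do rewrite mxE.
rewrite -(big_mkord xpredT (fun i => [:: 1; y; z]`_i * [:: 1; y; z]`_i)).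
case: n n2 hz => [|[|m]] // _ hz.
rewrite big_nat_recl // big_nat_recl //= mul1r addrA.
case: m hz => [[->|] //|m _].
  by rewrite big_geq // mulr0.
rewrite big_nat_recl //= big1 ?addr0 // => i _.
by rewrite nth_nil mulr0.
Qed.

Lemma N1_0 : N 1 (0%R : F) = 1%N.
Proof.
rewrite /= -(sum_eq1 0); apply: eq_bigr => x _.
by rewrite sub0r oppr_eq0 mulf_eq0 orbb.
Qed.

End Count.

Lemma PoszX (a k : nat) : ((a ^ k)%N : int) = (a : int) ^+ k.
Proof. by rewrite -!natz natrX. Qed.


Theorem proposition7 (F : finFieldType) (n : nat) (c : F) :
  (2 <= n)%N -> c != 0 ->
  let q := #|F| in
  let M : 'M[F]_n := c%:M in
  (~~ odd q ->
     Num0' M = [set 0] /\ #|nuM_fiber0 M| = (q ^ n.-1)%N) /\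
  (odd q ->
     ((3 <= n)%N \/ (n = 2%N /\ (q %% 4 = 1)%N) -> Num0' M = [set 0]) /\
     (n = 2%N -> (q %% 4 = 3)%N -> Num0' M = set0) /\
     (forall s : nat, n = (s.*2).+1 -> #|nuM_fiber0 M| = (q ^ s.*2)%N) /\
     (forall s : nat, n = s.*2 -> ~~ odd s \/ (q %% 4 = 1)%N ->
        #|nuM_fiber0 M| = (q ^ (s.*2).-1 + q ^ s - q ^ s.-1)%N) /\
     (forall s : nat, n = s.*2 -> odd s -> (q %% 4 = 3)%N ->
        #|nuM_fiber0 M| = (q ^ (s.*2).-1 - q ^ s + q ^ s.-1)%N)).
Proof.
move=> n2 c0 q M.
have fib : #|nuM_fiber0 M| = N n (0%R : F) by rewrite /M fiberE cardN.
split.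
  move=> eq; split.
    apply: (@Num0_ex _ _ _ (vec3 n 1 0)); first by apply: vec3_neq0; lia.
    rewrite sq_vec3 ?mulr0 ?addr0 ?mulr1; last by left.
      by apply/eqP; rewrite char2.
    by [].
  rewrite fib; case: n n2 {M fib} => [|n'] // _; exact: N_even_char2.
move=> oq.
set b := ~~ [exists i : F, i * i == -1].
have q1 := finNzRing_gt1 F; rewrite -/q in q1.
have N00 : N 0 (0%R : F) = 1%N by rewrite /= eqxx.
have CF := @closed_form b (q : int) (fun n => (N n (0%R : F))%:Z) (f_equal Posz N00) (f_equal Posz (N1_0 F))
   (fun n => N_rec_int n oq).
have m4 := sqm1_mod4 oq; rewrite -/q in m4.
have bE : b = ~~ (q %% 4 == 1)%N.
  rewrite /b; congr negb; apply/idP/eqP.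
    by case/existsP => i /eqP ii; apply/m4; exists i.
  by move/m4 => [i ii]; apply/existsP; exists i; rewrite ii.
split.
  case=> [n3|[n2' q4]].
    have [y [z e]] := sum2sq (-1) oq.
    apply: (@Num0_ex _ _ _ (vec3 n y z)); first by apply: vec3_neq0; lia.
    by rewrite sq_vec3 ?e -?addrA ?e ?subrr //; right.
  have [i ii] := (m4.2 q4).
  rewrite /M; move: c0 {fib M}; rewrite n2' => c0.
  apply: (@Num0_ex _ _ _ (vec3 2 i 0)); first by apply: vec3_neq0.
  by rewrite sq_vec3 ?ii ?mulr0 ?addr0 ?subrr //; left.
split.
  move=> n2' q3; rewrite /M; move: c0 {fib M}; rewrite n2' => c0.
  apply: Num0_none => u su.
  have nsq : forall i : F, i * i != -1.
    by move=> i; apply/eqP => ii; have := m4.1 (ex_intro _ i ii); rewrite q3.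
  have h1 : #|[set u : 'cV[F]_2 | sq u == 0]| == 1%N by rewrite cardN N2_0_nsq.
  case/cards1P: h1 => x hx.
  have : (0 : 'cV[F]_2) \in [set u : 'cV[F]_2 | sq u == 0].
    by rewrite inE /sq big1 // => i _; rewrite mxE mulr0.
  have : u \in [set u : 'cV[F]_2 | sq u == 0] by rewrite inE su.
  by rewrite hx !inE => /eqP -> /eqP ->.
split.
  move=> s ns; rewrite fib ns; have := (CF s).1; rewrite -PoszX.
  by case.
have even_case : forall s, n = s.*2 ->
    (N n (0%R : F) : int) = ((q ^ (s.*2).-1)%N : int) + (-1) ^+ (b && odd s) * (((q ^ s)%N : int) - ((q ^ s.-1)%N : int)).
  move=> [|s] ns; first by rewrite ns in n2.
  rewrite ns doubleS (CF s).2 /= !PoszX; congr (_ + _ * _).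
  by clear; case: b; rewrite ?expr1 ?expr0 ?expr1n // -signr_odd.
have hq0 : (0 < q)%N by lia.
have le1 : forall s, (q ^ s.-1 <= q ^ s)%N.
  by move=> s; apply: leq_pexp2l => //; lia.
have le2 : forall s, (q ^ s <= q ^ (s.*2).-1)%N.
  move=> [|s]; first by [].
  by apply: leq_pexp2l => //; rewrite doubleS /=; lia.
split.
  move=> s ns hs; rewrite fib; have := even_case s ns.
  have -> : b && odd s = false.
    by case: hs => [/negbTE ->|/eqP]; rewrite ?andbF // bE => ->.
  rewrite expr0 mul1r.
  have := le1 s; have := le2 s.
  move: (q ^ s)%N (q ^ s.-1)%N (q ^ (s.*2).-1)%N (N n 0) => A B C D; lia.
move=> s ns os q3; rewrite fib; have := even_case s ns.
have -> : b && odd s = true by rewrite os bE q3.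
rewrite expr1 mulN1r.
have := le1 s; have := le2 s.
move: (q ^ s)%N (q ^ s.-1)%N (q ^ (s.*2).-1)%N (N n 0) => A B C D; lia.
Qed.
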